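(* Let $j,i,j',i',j'',i''$ be nonnegative integers satisfying $i'-j=i''-j'=i-j''$. Then $u^{j,i,j',i',j'',i''}$ is invariant under the natural action of the dihedral group $D_6$ (the symmetry group of a hexagon) on its six arguments, viewed as placed cyclically in the order $(j,i,j',i',j'',i'')$ around a hexagon; i.e. $u^{j,i,j',i',j'',i''}=u^{j',i',j'',i'',j,i}$ (cyclic rotation by two places), $u^{j,i,j',i',j'',i''}=u^{i,j',i',j'',i'',j}$ (rotation by one place), and $u^{j,i,j',i',j'',i''}=u^{j'',i',j',i,j,i''}$ (a reflection), hence under all compositions of these.
   Context: $t$ is a formal variable, $\alpha_m=\prod_{r=1}^m(1-t^r)$ and $(x;t)_n=\prod_{s=0}^{n-1}(1-xt^s)$. For nonnegative integers $j,i,j',i',j'',i''$, \[u^{j,i,j',i',j'',i''}=\frac{\alpha_{i+j}}{\alpha_i\alpha_{i'}\alpha_{i''}\alpha_j\alpha_{j''}}\sum_{m=0}^{\min(i,i')}\frac{(t^{-i};t)_m\,(t^{-i'};t)_m}{(t;t)_m\,(t^{-(i+j)};t)_m}\,t^{m(i''+1)}\] (a terminating basic hypergeometric series ${}_2\phi_1$). Note the balance condition $i'-j=i''-j'=i-j''$ is itself preserved by the $D_6$ action. *)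

(* Defs.v *)
(* The formal variable t is 'X in the field Q(t) = {fraction {poly rat}}. *)
From HB Require Import structures.
From mathcomp Require Import all_boot all_order all_algebra fraction.
Set Implicit Arguments. Unset Strict Implicit. Unset Printing Implicit Defensive.
Import Order.TTheory GRing.Theory Num.Theory.
Local Open Scope ring_scope.

Definition Qt : fieldType := {fraction {poly rat}}.

Definition tq : Qt := FracField.tofrac ('X : {poly rat}).

Definition alpha (m : nat) : Qt := \prod_(1 <= r < m.+1) (1 - tq ^+ r).

Definition qpoch (x : Qt) (n : nat) : Qt := \prod_(s < n) (1 - x * tq ^+ s).

Definition u (j i j' i' j'' i'' : nat) : Qt :=
  alpha (i + j) / (alpha i * alpha i' * alpha i'' * alpha j * alpha j'') *
  \sum_(m < (minn i i').+1)
     (qpoch (tq ^- i) m * qpoch (tq ^- i') m)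
       / (qpoch tq m * qpoch (tq ^- (i + j)) m) * tq ^+ (m * (i'' + 1)).

(* Main.v *)
Require Import Defs.
From mathcomp Require Import all_boot all_order all_algebra fraction.
From mathcomp Require Import ring lra zify.
Set Implicit Arguments. Unset Strict Implicit. Unset Printing Implicit Defensive.
Import Order.TTheory GRing.Theory Num.Theory.
Local Open Scope ring_scope.

Lemma tq_neq0 : tq != 0.
Proof.
rewrite /tq -tofrac0 tofrac_eq. by rewrite polyX_eq0.
Qed.

Lemma tqXn_neq1 r : (0 < r)%N -> tq ^+ r != 1.
Proof.
move=> hr; rewrite /tq -tofracXn -tofrac1 tofrac_eq.
apply/eqP => /(congr1 (fun p : {poly rat} => size p)); rewrite size_polyXn size_poly1.
by case: r hr.
Qed.

Lemma alpha_neq0 n : alpha n != 0.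
Proof.
rewrite /alpha prodf_seq_neq0; apply/allP => r; rewrite mem_index_iota => /andP[h1 _].
by apply/implyP => _; rewrite subr_eq0 eq_sym tqXn_neq1.
Qed.

Lemma pas_alg (F : fieldType) (A B C a b : F) : A != 0 -> B != 0 -> C != 0 -> 1 - a != 0 -> 1 - b != 0 ->
  A * (1 - a * b) / (B * (1 - b) * (C * (1 - a))) =
  a * (A / (B * (C * (1 - a)))) + A / (B * (1 - b) * C).
Proof. move=> hA hB hC ha hb. field. by rewrite ?hA ?hB ?hC ?ha ?hb. Qed.

Definition pw (z : int) : Qt := tq ^ z.

Lemma pwD a b : pw (a + b) = pw a * pw b.
Proof. by rewrite /pw expfzDr // tq_neq0. Qed.

Lemma pw_nat (n : nat) : pw n%:Z = tq ^+ n.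
Proof. by []. Qed.

Lemma pw_neq0 z : pw z != 0.
Proof. by rewrite /pw expfz_neq0 // tq_neq0. Qed.

Lemma pw0 : pw 0 = 1.
Proof. by []. Qed.

Lemma pw_eq1 z : z = 0 -> pw z = 1.
Proof. by move->. Qed.

Lemma pw_eq z1 z2 : z1 = z2 -> pw z1 = pw z2.
Proof. by move->. Qed.

Lemma alphaS n : alpha n.+1 = alpha n * (1 - tq ^+ n.+1).
Proof. by rewrite /alpha big_nat_recr. Qed.

Lemma alpha0 : alpha 0 = 1.
Proof. by rewrite /alpha big_geq. Qed.

Lemma one_sub_neq0 n : (0 < n)%N -> 1 - tq ^+ n != 0.
Proof. by move=> h; rewrite subr_eq0 eq_sym tqXn_neq1. Qed.

Definition qbin (n m : nat) : Qt :=
  if (m <= n)%N then alpha n / (alpha m * alpha (n - m)) else 0.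

Lemma qbin0 n : qbin n 0 = 1.
Proof. by rewrite /qbin leq0n alpha0 subn0 mul1r divff // alpha_neq0. Qed.

Lemma qbinn n : qbin n n = 1.
Proof. by rewrite /qbin leqnn subnn alpha0 mulr1 divff // alpha_neq0. Qed.

Lemma qbin_gt n m : (n < m)%N -> qbin n m = 0.
Proof. by rewrite /qbin ltnNge => /negbTE ->. Qed.

Lemma qbin_pascal n k :
  qbin n.+1 k.+1 = pw (n%:Z - k%:Z) * qbin n k + qbin n k.+1.
Proof.
case: (ltngtP k n) => hk.
- rewrite /qbin ltnS (ltnW hk) hk subSS.
  have e1 : (n - k = (n - k.+1).+1)%N by lia.
  have e2 : (n%:Z - k%:Z = (n - k)%N%:Z) by lia.
  rewrite e2 pw_nat e1 !alphaS.
  have e3 : tq ^+ n.+1 = tq ^+ (n - k.+1).+1 * tq ^+ k.+1 by rewrite -exprD; congr (_ ^+ _); lia.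
  rewrite e3.
  have h1 := alpha_neq0 k; have h2 := alpha_neq0 (n - k.+1); have h3 := alpha_neq0 n.
  have h4 := one_sub_neq0 (ltn0Sn k); have h5 := one_sub_neq0 (ltn0Sn (n - k.+1)).
  set a := tq ^+ (n - k.+1).+1 in h5 *; set b := tq ^+ k.+1 in h4 *.
  move: (alpha n) (alpha k) (alpha (n - k.+1)) h1 h2 h3 => A B C hB hC hA.
  move: a b h4 h5 => a b h4 h5.
  exact: pas_alg.
- rewrite (qbin_gt (n:=n) (m:=k)) // (qbin_gt (n:=n) (m:=k.+1)) ?qbin_gt ?ltnS //.
  by rewrite mulr0 addr0.
  by rewrite ltnW.
- by rewrite hk qbinn qbinn qbin_gt // subrr pw0 mulr1 addr0.
Qed.

Lemma qbin0n m : qbin 0 m.+1 = 0.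
Proof. by rewrite qbin_gt. Qed.

Lemma qvdm a N n :
  \sum_(k < n.+1) pw (k%:Z * (k%:Z + N%:Z - n%:Z)) * qbin a k * qbin N (n - k)
  = qbin (a + N) n.
Proof.
elim: a n => [|a IH] n.
  rewrite big_ord_recl /= big1 ?addr0; last by move=> i _; rewrite qbin0n mulr0 mul0r.
  rewrite qbin0 subn0 mulr1 -[RHS]mul1r; congr (_ * _); apply: pw_eq1; lia.
case: n => [|n0].
  rewrite big_ord_recl big_ord0 addr0 /= subnn !qbin0 !mulr1; apply: pw_eq1; lia.
rewrite big_ord_recl /=.
rewrite [X in X + _](_ : _ = qbin N n0.+1); last first.
  rewrite qbin0 subn0 mulr1 -[RHS]mul1r; congr (_ * _); apply: pw_eq1; lia.
under eq_bigr => k _ do rewrite /bump /= add1n subSS qbin_pascal mulrDr mulrDl.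
rewrite big_split /= addrCA.
have -> : qbin N n0.+1 + \sum_(k < n0.+1) pw (k.+1%:Z * (k.+1%:Z + N%:Z - n0.+1%:Z)) * qbin a k.+1 * qbin N (n0 - k)
   = qbin (a + N) n0.+1.
  rewrite -IH [RHS]big_ord_recl /=; congr (_ + _).
    rewrite qbin0 subn0 mulr1 -[LHS]mul1r; congr (_ * _); apply/esym/pw_eq1; lia.
have -> : \sum_(k < n0.+1) pw (k.+1%:Z * (k.+1%:Z + N%:Z - n0.+1%:Z)) * (pw (a%:Z - k%:Z) * qbin a k) * qbin N (n0 - k)
   = pw (a%:Z + N%:Z - n0%:Z) * qbin (a + N) n0.
  rewrite -IH mulr_sumr; apply: eq_bigr => k _.
  rewrite !mulrA -!pwD; congr (pw _ * _ * _); lia.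
rewrite addSn qbin_pascal; congr (pw _ * _ + _); lia.
Qed.

Lemma qbinom_alg (R : comRingType) (S y T1 T2 : R) :
  T1 = - y * S -> 1 + T2 = S -> S * (1 - y) = 1 + (T1 + T2).
Proof. by move=> -> <-; ring. Qed.

Lemma qb_alg (R : comRingType) (P1 P2 P3 T q x : R) k : P1 * P2 = T * P3 ->
  (-1) ^+ k.+1 * P1 * (P2 * q) * x ^+ k.+1 = - (x * T) * ((-1) ^+ k * P3 * q * x ^+ k).
Proof.
move=> h; rewrite !exprS; move: ((-1) ^+ k) (x ^+ k) => E X.
have -> : -1 * E * P1 * (P2 * q) * (x * X) = - (E * (P1 * P2) * q * x * X) by ring.
by rewrite h; ring.
Qed.

Lemma qbinom x n :
  qpoch x n = \sum_(m < n.+1) (-1) ^+ m * pw ('C(m, 2)%:Z) * qbin n m * x ^+ m.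
Proof.
elim: n => [|n IH].
  by rewrite /qpoch big_ord0 big_ord1 /= expr0 pw0 qbin0 !mul1r.
have -> : qpoch x n.+1 = qpoch x n * (1 - x * tq ^+ n) by rewrite /qpoch big_ord_recr.
rewrite IH [RHS]big_ord_recl /= qbin0 expr0 pw0 !mul1r.
under [in RHS]eq_bigr => k _ do rewrite /bump /= add1n qbin_pascal mulrDr mulrDl.
rewrite big_split /=; apply: qbinom_alg.
  rewrite mulr_sumr; apply: eq_bigr => k _.
  apply: qb_alg; rewrite -[tq ^+ n]/(pw n%:Z) -!pwD; apply: pw_eq.
  rewrite binS bin1; lia.
rewrite [RHS](_ : _ = \sum_(m < n.+2) (-1) ^+ m * pw ('C(m, 2)%:Z) * qbin n m * x ^+ m).
  rewrite [RHS]big_ord_recl /= qbin0 expr0 pw0 !mul1r. by rewrite expr0.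
by rewrite [RHS]big_ord_recr /= qbin_gt // mulr0 mul0r addr0.
Qed.

Lemma qpoch_tq m : qpoch tq m = alpha m.
Proof.
elim: m => [|m IH]; first by rewrite /qpoch big_ord0 alpha0.
by rewrite /qpoch big_ord_recr /= -/(qpoch _ _) IH alphaS exprS.
Qed.

Lemma qpochS x m : qpoch x m.+1 = qpoch x m * (1 - x * tq ^+ m).
Proof. by rewrite /qpoch big_ord_recr. Qed.

Lemma qpochN_alg (F : fieldType) (Q A1 A2 s p a b : F) :
  A1 != 0 -> 1 - b != 0 -> a * b = 1 ->
  Q * (A1 * (1 - b)) = s * p * A2 ->
  Q * (1 - a) * A1 = - s * (p * a) * A2.
Proof.
move=> hA hb hab hQ.
have -> : 1 - a = - a * (1 - b) by rewrite -{1}hab; ring.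
transitivity (- a * (Q * (A1 * (1 - b)))); first by ring.
by rewrite hQ; ring.
Qed.

Lemma qpochN n m : (m <= n)%N ->
  qpoch (tq ^- n) m * alpha (n - m) = (-1) ^+ m * pw ('C(m, 2)%:Z - (n * m)%:Z) * alpha n.
Proof.
elim: m => [|m IH] hm.
  by rewrite /qpoch big_ord0 subn0 mul1r expr0 mul1r pw_eq1 ?mul1r // muln0 bin0n subr0.
have e : (n - m = (n - m.+1).+1)%N by lia.
move: IH; rewrite e alphaS qpochS => IH.
have -> : tq ^- n * tq ^+ m = pw (m%:Z - n%:Z).
  by rewrite addrC pwD /pw -invr_expz.
have -> : pw ('C(m.+1, 2)%:Z - (n * m.+1)%:Z) = pw ('C(m, 2)%:Z - (n * m)%:Z) * pw (m%:Z - n%:Z).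
  by rewrite -pwD; apply: pw_eq; rewrite binS bin1; lia.
rewrite exprS mulN1r.
apply: (qpochN_alg (b := tq ^+ (n - m.+1).+1)); first exact: alpha_neq0.
- exact: one_sub_neq0.
- by rewrite -[tq ^+ _]/(pw (Posz (n - m.+1).+1)) -pwD; apply: pw_eq1; lia.
- by apply: IH; lia.
Qed.

Lemma stepA_alg (F : fieldType) (Aij Ai Ai' Ai'' Aj Aj'' Aim Ai'm Aijm Am s p1 p2 p3 p4 pE P1 P2 P3 : F) :
  Aij != 0 -> Ai != 0 -> Ai' != 0 -> Ai'' != 0 -> Aj != 0 -> Aj'' != 0 ->
  Aim != 0 -> Ai'm != 0 -> Aijm != 0 -> Am != 0 -> s != 0 -> p3 != 0 ->
  P1 * Aim = s * p1 * Ai -> P2 * Ai'm = s * p2 * Ai' -> P3 * Aijm = s * p3 * Aij ->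
  pE * p3 = p1 * p2 * p4 ->
  Aij / (Ai * Ai' * Ai'' * Aj * Aj'') * (P1 * P2 / (Am * P3) * p4)
  = s * pE / (Am * Ai'm * Ai'' * Aj'') * (Aijm / (Aj * Aim)).
Proof.
move=> h1 h2 h3 h4 h5 h6 h7 h8 h9 h10 h11 h12 e1 e2 e3 e4.
have -> : P1 = s * p1 * Ai / Aim by rewrite -e1; field.
have -> : P2 = s * p2 * Ai' / Ai'm by rewrite -e2; field.
have -> : P3 = s * p3 * Aij / Aijm by rewrite -e3; field.
have -> : pE = p1 * p2 * p4 / p3 by rewrite -e4; field.
field.
by rewrite ?h1 ?h2 ?h3 ?h4 ?h5 ?h6 ?h7 ?h8 ?h9 ?h10 ?h11 ?h12.
Qed.

Definition Eterm (j i j' i' j'' i'' m : nat) : Qt :=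
  (-1) ^+ m * pw ((m * j')%:Z + 'C(m.+1, 2)%:Z) / (alpha m * alpha (i' - m) * alpha i'' * alpha j'')
  * qbin (i + j - m) j.

Lemma stepA j i j' i' j'' i'' : (i' + j' = i'' + j)%N ->
  u j i j' i' j'' i'' = \sum_(m < (minn i i').+1) Eterm j i j' i' j'' i'' m.
Proof.
move=> B1; rewrite /u mulr_sumr; apply: eq_bigr => -[m hm] _ /=.
have hmi : (m <= i)%N by move: hm; rewrite ltnS leq_min => /andP[].
have hmi' : (m <= i')%N by move: hm; rewrite ltnS leq_min => /andP[].
have hmij : (m <= i + j)%N by lia.
rewrite /Eterm /qbin (_ : (j <= i + j - m)%N); last by lia.
rewrite (_ : (i + j - m - j = i - m)%N); last by lia.
rewrite qpoch_tq -[tq ^+ (m * (i'' + 1))]/(pw (m * (i'' + 1))%N).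
apply: (@stepA_alg _ _ _ _ _ _ _ _ _ _ _ ((-1) ^+ m) (pw ('C(m, 2)%:Z - (i * m)%:Z))
  (pw ('C(m, 2)%:Z - (i' * m)%:Z)) (pw ('C(m, 2)%:Z - ((i + j) * m)%:Z)));
  rewrite ?alpha_neq0 ?pw_neq0 ?signr_eq0 //.
- exact: qpochN.
- exact: qpochN.
- exact: qpochN.
- rewrite -!pwD; apply: pw_eq; rewrite binS bin1; lia.
Qed.

Lemma qpoch_alpha a b : qpoch (tq ^+ a.+1) b * alpha a = alpha (a + b).
Proof.
elim: b => [|b IH]; first by rewrite /qpoch big_ord0 mul1r addn0.
rewrite qpochS addnS alphaS -IH -exprD addSn; ring.
Qed.

Lemma qpoch_zero (z : int) b (s : nat) : (s < b)%N -> z + s%:Z = 0 -> qpoch (pw z) b = 0.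
Proof.
move=> hs hz; rewrite /qpoch (bigD1 (Ordinal hs)) //= -[tq ^+ s]/(pw s%:Z) -pwD hz pw0.
by rewrite subrr mul0r.
Qed.

Lemma sum_widen (F : nat -> Qt) a b : (a <= b)%N ->
  (forall k, (a <= k)%N -> (k < b)%N -> F k = 0) ->
  \sum_(k < b) F k = \sum_(k < a) F k.
Proof.
move=> hab hF; rewrite -!(big_mkord xpredT) (big_cat_nat (leq0n a) hab) /=.
rewrite [X in _ + X = _]big_nat_cond [X in _ + X = _]big1 ?addr0 // => k /andP[/andP[h1 h2] _].
exact: hF.
Qed.

Definition W1t (j i j' i' j'' i'' k : nat) : Qt :=
  if [&& (j <= k + i')%N, (k <= j)%N, (k <= j')%N & (k <= j'')%N] then
    pw (k * (k + i' - j))%N%:Z /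
      (alpha k * alpha (k + i' - j) * alpha (j - k) * alpha (j' - k) * alpha (j'' - k))
  else 0.

Definition cm (j' i' j'' i'' m : nat) : Qt :=
  (-1) ^+ m * pw ((m * j')%:Z + 'C(m.+1, 2)%:Z) / (alpha m * alpha (i' - m) * alpha i'' * alpha j'').

Lemma C1_alg (F : fieldType) (s p1 p2 p3 p4 p5 Am Ai'm Ai'' Aj'' Ak Aj''k Ajk Ak'm Ak' : F) :
  Am != 0 -> Ai'm != 0 -> Ai'' != 0 -> Aj'' != 0 -> Ak != 0 -> Aj''k != 0 -> Ajk != 0 ->
  Ak'm != 0 -> Ak' != 0 -> p4 != 0 -> p5 != 0 ->
  p1 * p2 = p3 * p4 * p5 ->
  s * p1 / (Am * Ai'm * Ai'' * Aj'') * (p2 * (Aj'' / (Ak * Aj''k)) * (Ai'm / (Ajk * Ak'm)))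
  = p3 / (Ak' * Ai'' * Ak * Aj''k * Ajk) * (s * p4 * (Ak' / (Am * Ak'm)) * p5).
Proof.
move=> h1 h2 h3 h4 h5 h6 h7 h8 h9 h10 h11 e.
have -> : p3 = p1 * p2 / (p4 * p5) by rewrite e; field; rewrite ?h10 ?h11.
field.
by rewrite ?h1 ?h2 ?h3 ?h4 ?h5 ?h6 ?h7 ?h8 ?h9 ?h10 ?h11.
Qed.

Lemma pwX z n : pw z ^+ n = pw (z * n%:Z).
Proof. by rewrite /pw -exprz_exp. Qed.

Lemma perkC1 j i j' i' j'' i'' k m :
  (i' + j'' = i + j)%N -> (k <= j)%N -> (k <= j'')%N -> (j <= k + i')%N -> (m <= i')%N ->
  cm j' i' j'' i'' m * (pw (k%:Z * (k%:Z + (i' - m)%N%:Z - j%:Z)) * qbin j'' k * qbin (i' - m) (j - k))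
  = pw (k * (k + i' - j))%N%:Z / (alpha (k + i' - j) * alpha i'' * alpha k * alpha (j'' - k) * alpha (j - k))
    * ((-1) ^+ m * pw ('C(m, 2)%:Z) * qbin (k + i' - j) m * pw (j'%:Z - k%:Z + 1) ^+ m).
Proof.
move=> B3 hkj hkj'' hk hmi'.
case: (leqP m (k + i' - j)) => hm.
  rewrite /cm {1}/qbin hkj'' {1}/qbin (_ : (j - k <= i' - m)%N); last by lia.
  rewrite /qbin hm.
  rewrite (_ : (i' - m - (j - k) = k + i' - j - m)%N); last by lia.
  apply: C1_alg; rewrite ?alpha_neq0 ?pw_neq0 ?expf_neq0 ?pw_neq0 //.
  rewrite pwX -!pwD; apply: pw_eq; rewrite binS bin1.
  have e1 : ((i' - m)%N%:Z = i'%:Z - m%:Z) by lia.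
  have e3 : ((k + i' - j)%N%:Z = k%:Z + i'%:Z - j%:Z) by lia.
  rewrite e1 !PoszM e3 PoszD; lia.
rewrite [qbin (k + i' - j) m]qbin_gt // [qbin (i' - m) _]qbin_gt; last by lia.
by rewrite !(mulr0, mul0r).
Qed.

Lemma C3_alg (F : fieldType) (p Q Ak' Ai'' Ak Aj''k Ajk Aj'k : F) :
  Ak' != 0 -> Ai'' != 0 -> Ak != 0 -> Aj''k != 0 -> Ajk != 0 -> Aj'k != 0 ->
  Q * Aj'k = Ai'' ->
  p / (Ak' * Ai'' * Ak * Aj''k * Ajk) * Q = p / (Ak * Ak' * Ajk * Aj'k * Aj''k).
Proof.
move=> h1 h2 h3 h4 h5 h6 e.
have -> : Q = Ai'' / Aj'k by rewrite -e; field.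
field.
by rewrite ?h1 ?h2 ?h3 ?h4 ?h5 ?h6.
Qed.

Lemma perk j i j' i' j'' i'' k :
  (i' + j' = i'' + j)%N -> (i' + j'' = i + j)%N -> (k <= j)%N ->
  \sum_(m < (minn i i').+1) cm j' i' j'' i'' m *
     (pw (k%:Z * (k%:Z + (i' - m)%N%:Z - j%:Z)) * qbin j'' k * qbin (i' - m) (j - k))
  = W1t j i j' i' j'' i'' k.
Proof.
move=> B1 B3 hkj.
case: (ltnP j'' k) => hA.
  rewrite big1 => [|m _]; last by rewrite qbin_gt // !(mulr0, mul0r).
  by rewrite /W1t ifF //; apply/negbTE/and4P => -[? ? ? ?]; lia.
case: (ltnP (k + i') j) => hB.
  rewrite big1 => [|m _]; last by rewrite [qbin (i' - m) _]qbin_gt ?(mulr0, mul0r) //; lia.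
  by rewrite /W1t ifF //; apply/negbTE/and4P => -[? ? ? ?]; lia.
set k' := (k + i' - j)%N.
set K := pw (k * k')%N%:Z / (alpha k' * alpha i'' * alpha k * alpha (j'' - k) * alpha (j - k)).
set f := fun m : nat => (-1) ^+ m * pw ('C(m, 2)%:Z) * qbin k' m * pw (j'%:Z - k%:Z + 1) ^+ m.
rewrite (eq_bigr (fun m : 'I_(minn i i').+1 => K * f m)); last first.
  move=> m _; apply: (@perkC1 j i) => //.
  by move: (ltn_ord m); rewrite ltnS leq_min => /andP[].
rewrite -mulr_sumr (sum_widen (F := f) (a := k'.+1)); last 2 first.
- rewrite ltnS leq_min; apply/andP; split; lia.
- by move=> m hm _; rewrite /f qbin_gt // mulr0 mul0r.
rewrite -qbinom.
case: (leqP k j') => hC.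
  rewrite /W1t ifT; last by apply/and4P; split; lia.
  rewrite (_ : j'%:Z - k%:Z + 1 = (j' - k).+1%:Z); last by lia.
  rewrite -[pw _]/(tq ^+ (j' - k).+1).
  apply: C3_alg; rewrite ?alpha_neq0 //.
  rewrite qpoch_alpha; congr alpha; lia.
rewrite (@qpoch_zero _ _ (k - j' - 1)); last 2 first.
- lia.
- lia.
by rewrite mulr0 /W1t ifF //; apply/negbTE/and4P => -[? ? ? ?]; lia.
Qed.

Definition W1 (j i j' i' j'' i'' : nat) : Qt :=
  \sum_(k < (j + i + j' + i' + j'' + i'').+1) W1t j i j' i' j'' i'' k.

Lemma stepB j i j' i' j'' i'' :
  (i' + j' = i'' + j)%N -> (i' + j'' = i + j)%N ->
  \sum_(m < (minn i i').+1) Eterm j i j' i' j'' i'' m = W1 j i j' i' j'' i''.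
Proof.
move=> B1 B3.
have e : forall m : 'I_(minn i i').+1, Eterm j i j' i' j'' i'' m =
   \sum_(k < j.+1) cm j' i' j'' i'' m *
     (pw (k%:Z * (k%:Z + (i' - m)%N%:Z - j%:Z)) * qbin j'' k * qbin (i' - m) (j - k)).
  move=> m; have hm : (m <= i')%N by move: (ltn_ord m); rewrite ltnS leq_min => /andP[].
  rewrite /Eterm -/(cm j' i' j'' i'' m) -mulr_sumr; congr (_ * _).
  rewrite qvdm; congr qbin; lia.
rewrite (eq_bigr _ (fun m _ => e m)) exchange_big /=.
rewrite (eq_bigr _ (fun (k : 'I_j.+1) _ => @perk j i j' i' j'' i'' k B1 B3 (ltn_ord k))).
rewrite /W1 (sum_widen (F := W1t j i j' i' j'' i'') (a := j.+1)) //; first lia.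
by move=> k hk _; rewrite /W1t ifF //; apply/negbTE/and4P => -[? ? ? ?]; lia.
Qed.

Lemma u_W1 j i j' i' j'' i'' :
  (i' + j' = i'' + j)%N -> (i'' + j'' = i + j')%N ->
  u j i j' i' j'' i'' = W1 j i j' i' j'' i''.
Proof.
move=> B1 B2; rewrite stepA // stepB //; lia.
Qed.

Lemma shift_sum (F : nat -> Qt) d N :
  (forall K, (K < d)%N -> F K = 0) -> (forall K, (N <= K)%N -> F K = 0) ->
  \sum_(K < N) F K = \sum_(k < N) F (k + d)%N.
Proof.
move=> h1 h2.
rewrite -(@sum_widen F N (N + d)); last 2 first.
- exact: leq_addr.
- by move=> K hK _; apply: h2.
rewrite -!(big_mkord xpredT) (big_cat_nat (leq0n d)) /=; last exact: leq_addl.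
rewrite big_nat_cond big1 ?add0r; last by move=> K /andP[/andP[_ hK] _]; apply: h1.
by rewrite -{1}[d]add0n big_addn addnK big_mkord.
Qed.

Lemma W1_refl j i j' i' j'' i'' :
  (i' + j' = i'' + j)%N -> (i'' + j'' = i + j')%N ->
  W1 j'' i' j' i j i'' = W1 j i j' i' j'' i''.
Proof.
move=> B1 B2; rewrite /W1.
rewrite (_ : (j'' + i' + j' + i + j + i'' = j + i + j' + i' + j'' + i'')%N); last by lia.
apply: eq_bigr => k _; rewrite /W1t.
have -> : [&& (j'' <= k + i)%N, (k <= j'')%N, (k <= j')%N & (k <= j)%N] =
          [&& (j <= k + i')%N, (k <= j)%N, (k <= j')%N & (k <= j'')%N].
  by apply/idP/idP => /and4P[? ? ? ?]; apply/and4P; split; lia.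
case: ifP => // _.
rewrite (_ : (k + i - j'' = k + i' - j)%N); last by lia.
congr (_ / _); ring.
Qed.

Lemma W1_rot_pos j i j' i' j'' i'' :
  (i' + j' = i'' + j)%N -> (i'' + j'' = i + j')%N -> (j <= i')%N ->
  W1 i j' i' j'' i'' j = W1 j i j' i' j'' i''.
Proof.
move=> B1 B2 hd; rewrite /W1.
rewrite (_ : (i + j' + i' + j'' + i'' + j = j + i + j' + i' + j'' + i'')%N); last by lia.
rewrite (@shift_sum _ (i' - j)); last 2 first.
- by move=> K hK; rewrite /W1t ifF //; apply/negbTE/and4P => -[? ? ? ?]; lia.
- by move=> K hK; rewrite /W1t ifF //; apply/negbTE/and4P => -[? ? ? ?]; lia.
apply: eq_bigr => k _; rewrite /W1t.
have -> : [&& (i <= k + (i' - j) + j'')%N, (k + (i' - j) <= i)%N, (k + (i' - j) <= i')%N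
            & (k + (i' - j) <= i'')%N] =
          [&& (j <= k + i')%N, (k <= j)%N, (k <= j')%N & (k <= j'')%N].
  by apply/idP/idP => /and4P[? ? ? ?]; apply/and4P; split; lia.
case: ifP => // /and4P[? ? ? ?].
rewrite (_ : (k + (i' - j) + j'' - i = k)%N); last by lia.
rewrite (_ : (k + i' - j = k + (i' - j))%N); last by lia.
rewrite (_ : (i - (k + (i' - j)) = j'' - k)%N); last by lia.
rewrite (_ : (i' - (k + (i' - j)) = j - k)%N); last by lia.
rewrite (_ : (i'' - (k + (i' - j)) = j' - k)%N); last by lia.
rewrite mulnC; congr (_ / _); ring.
Qed.

Lemma W1_rot j i j' i' j'' i'' :
  (i' + j' = i'' + j)%N -> (i'' + j'' = i + j')%N ->
  W1 i j' i' j'' i'' j = W1 j i j' i' j'' i''.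
Proof.
move=> B1 B2.
case: (leqP j i') => hd; first exact: W1_rot_pos.
rewrite -(@W1_refl i j' i' j'' i'' j); try lia.
rewrite -(@W1_rot_pos i'' j'' i' j' i j); try lia.
exact: W1_refl.
Qed.

Theorem lemma3p2 (j i j' i' j'' i'' : nat) :
  (i'%:Z - j%:Z = i''%:Z - j'%:Z)%R ->
  (i''%:Z - j'%:Z = i%:Z - j''%:Z)%R ->
  [/\ u j i j' i' j'' i'' = u j' i' j'' i'' j i,
      u j i j' i' j'' i'' = u i j' i' j'' i'' j
    & u j i j' i' j'' i'' = u j'' i' j' i j i''].
Proof.
move=> H1 H2.
have B1 : (i' + j' = i'' + j)%N by lia.
have B2 : (i'' + j'' = i + j')%N by lia.
rewrite !u_W1 //; try lia.
split.
- rewrite -(@W1_rot j i j' i' j'' i'') // -(@W1_rot i j' i' j'' i'' j) //; lia.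
- by rewrite (@W1_rot j i j' i' j'' i'').
- by rewrite (@W1_refl j i j' i' j'' i'').
Qed.
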